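(* A $po$-$\Gamma$-semigroup $M$ is intra-regular if and only if for every fuzzy right ideal $f$ and every fuzzy left ideal $g$ of $M$, we have $f\wedge g\preceq g\circ f$.
   Context: Let $M$ and $\Gamma$ be nonempty sets with a map $M\times\Gamma\times M\to M$, $(a,\gamma,b)\mapsto a\gamma b$, satisfying $(a\gamma b)\mu c=a\gamma(b\mu c)$ for all $a,b,c\in M$, $\gamma,\mu\in\Gamma$. A $po$-$\Gamma$-semigroup is such an $M$ with a partial order $\le$ such that $a\le b$ implies $a\gamma c\le b\gamma c$ and $c\gamma a\le c\gamma b$ for all $c\in M$, $\gamma\in\Gamma$. For $H\subseteq M$, $(H]=\{t\in M: t\le h \text{ for some } h\in H\}$; $M\Gamma a\Gamma a\Gamma M=\{x\gamma a\mu a\rho y: x,y\in M,\gamma,\mu,\rho\in\Gamma\}$. $M$ is intra-regular if $a\in(M\Gamma a\Gamma a\Gamma M]$ for every $a\in M$. A fuzzy subset of $M$ is a map $M\to[0,1]$. For $a\in M$ let $A_a=\{(y,z)\in M\times M: a\le y\gamma z \text{ for some }\gamma\in\Gamma\}$. $(f\circ g)(a)=\bigvee_{(y,z)\in A_a}\min\{f(y),g(z)\}$ if $A_a\ne\emptyset$, and $0$ otherwise. $(f\wedge g)(a)=\min\{f(a),g(a)\}$; $f\preceq g$ means $f(a)\le g(a)$ for all $a$. A fuzzy right (resp. left) ideal is a fuzzy subset $f$ with $f(x\gamma y)\ge f(x)$ (resp. $f(x\gamma y)\ge f(y)$) for all $x,y\in M,\gamma\in\Gamma$, and $x\le y\Rightarrow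 f(x)\ge f(y)$. *)

(* Defs.v *)
From Stdlib Require Import Reals.
From Coquelicot Require Import Coquelicot.
Open Scope R_scope.

Section POGamma.
Context {M G : Type} (op : M -> G -> M -> M) (le : M -> M -> Prop).

Definition is_po_gamma_semigroup : Prop :=
  (exists a : M, True) /\ (exists g : G, True) /\
  (forall a b c (g m : G), op (op a g b) m c = op a g (op b m c)) /\
  (forall a, le a a) /\
  (forall a b, le a b -> le b a -> a = b) /\
  (forall a b c, le a b -> le b c -> le a c) /\
  (forall a b c (g : G), le a b -> le (op a g c) (op b g c) /\ le (op c g a) (op c g b)).

Definition intra_regular : Prop :=
  forall a : M, exists (x y : M) (g m r : G),
    le a (op (op (op x g a) m a) r y).

Definition fuzzy_subset (f : M -> R) : Prop := forall x, 0 <= f x <= 1.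

Definition fuzzy_right_ideal (f : M -> R) : Prop :=
  fuzzy_subset f /\
  (forall x y (g : G), f (op x g y) >= f x) /\
  (forall x y, le x y -> f x >= f y).

Definition fuzzy_left_ideal (f : M -> R) : Prop :=
  fuzzy_subset f /\
  (forall x y (g : G), f (op x g y) >= f y) /\
  (forall x y, le x y -> f x >= f y).

Definition A_set (a : M) (p : M * M) : Prop :=
  exists g : G, le a (op (fst p) g (snd p)).

(* (f o g)(a) = sup_{(y,z) in A_a} min (f y) (g z) if A_a nonempty, else 0 *)
Definition fuzzy_comp (f h : M -> R) (a : M) : R :=
  match Lub_Rbar (fun t => exists p, A_set a p /\ t = Rmin (f (fst p)) (h (snd p))) with
  | Finite r => r
  | _ => 0
  end.

Definition fuzzy_meet (f h : M -> R) : M -> R := fun a => Rmin (f a) (h a).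

Definition fuzzy_le (f h : M -> R) : Prop := forall a, f a <= h a.

End POGamma.

(* Main.v *)
Require Import Defs.
From Stdlib Require Import Reals Lra.
From Stdlib Require Import ClassicalEpsilon.
From Coquelicot Require Import Coquelicot.

Definition chi {M : Type} (P : M -> Prop) (t : M) : R :=
  if excluded_middle_informative (P t) then 1 else 0.

Lemma chi_range {M : Type} (P : M -> Prop) t : 0 <= chi P t <= 1.
Proof. unfold chi; destruct excluded_middle_informative; lra. Qed.

Theorem theorem16 (M G : Type) (op : M -> G -> M -> M) (le : M -> M -> Prop)
  (HM : is_po_gamma_semigroup op le) :
  intra_regular op le <->
  (forall f h : M -> R, fuzzy_right_ideal op le f -> fuzzy_left_ideal op le h ->
     fuzzy_le (fuzzy_meet f h) (fuzzy_comp op le h f)).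
Proof.
  destruct HM as [_ [_ [Hassoc [Hrefl [Hanti [Htrans Hmono]]]]]].
  assert (Hm2 : forall u u' v v' (g : G), le u u' -> le v v' -> le (op u g v) (op u' g v')).
  { intros u u' v v' g H1 H2. apply Htrans with (op u' g v).
    - apply (Hmono u u' v g H1). - apply (Hmono v v' u' g H2). }
  split.
  - intros IR f h [Hf1 [Hf2 Hf3]] [Hh1 [Hh2 Hh3]] a.
    unfold fuzzy_meet, fuzzy_comp.
    destruct (IR a) as [x [y [g [m [r Ha]]]]].
    set (E := fun t => exists p, A_set op le a p /\ t = Rmin (h (fst p)) (f (snd p))).
    assert (elem : E (Rmin (h (op x g a)) (f (op a r y)))).
    { exists (op x g a, op a r y). split; [|reflexivity].
      exists m. simpl. rewrite <- Hassoc. exact Ha. }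
    assert (Hle : Rmin (f a) (h a) <= Rmin (h (op x g a)) (f (op a r y))).
    { pose proof (Hh2 x a g). pose proof (Hf2 a y r).
      unfold Rmin; repeat destruct Rle_dec; lra. }
    destruct (Lub_Rbar_correct E) as [Hub Hlub].
    destruct (Lub_Rbar E) as [l| |] eqn:Hl.
    + pose proof (Hub _ elem). simpl in *. lra.
    + exfalso. assert (U : is_ub_Rbar E (Finite 1)).
      { intros t [p [_ ->]]. simpl. pose proof (Hh1 (fst p)).
        pose proof (Rmin_l (h (fst p)) (f (snd p))). lra. }
      specialize (Hlub _ U). simpl in Hlub. exact Hlub.
    + exfalso. pose proof (Hub _ elem). simpl in *. exact H.
  - intros Hfz a.
    set (Rr := fun t => le t a \/ exists (n : M) (g : G), le t (op a g n)).
    set (Ll := fun t => le t a \/ exists (n : M) (g : G), le t (op n g a)).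
    assert (HR : fuzzy_right_ideal op le (chi Rr)).
    { split; [intro; apply chi_range|split].
      - intros x y g. unfold chi at 2.
        destruct excluded_middle_informative as [Hx|Hx]; [|pose proof (chi_range Rr (op x g y)); lra].
        unfold chi. destruct excluded_middle_informative as [_|Hn]; [lra|exfalso; apply Hn].
        right. destruct Hx as [Hx|[n [g' Hx]]].
        + exists y, g. apply Hmono; exact Hx.
        + exists (op n g y), g'. rewrite <- Hassoc. apply Hmono; exact Hx.
      - intros x y Hxy. unfold chi at 2.
        destruct excluded_middle_informative as [Hy|Hy]; [|pose proof (chi_range Rr x); lra].
        unfold chi. destruct excluded_middle_informative as [_|Hn]; [lra|exfalso; apply Hn].
        destruct Hy as [Hy|[n [g' Hy]]].
        + left; eauto. + right; exists n, g'; eauto. }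
    assert (HL : fuzzy_left_ideal op le (chi Ll)).
    { split; [intro; apply chi_range|split].
      - intros x y g. unfold chi at 2.
        destruct excluded_middle_informative as [Hx|Hx]; [|pose proof (chi_range Ll (op x g y)); lra].
        unfold chi. destruct excluded_middle_informative as [_|Hn]; [lra|exfalso; apply Hn].
        right. destruct Hx as [Hx|[n [g' Hx]]].
        + exists x, g. apply Hmono; exact Hx.
        + exists (op x g n), g'. rewrite Hassoc. apply Hmono; exact Hx.
      - intros x y Hxy. unfold chi at 2.
        destruct excluded_middle_informative as [Hy|Hy]; [|pose proof (chi_range Ll x); lra].
        unfold chi. destruct excluded_middle_informative as [_|Hn]; [lra|exfalso; apply Hn].
        destruct Hy as [Hy|[n [g' Hy]]].
        + left; eauto. + right; exists n, g'; eauto. }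
    specialize (Hfz _ _ HR HL a). unfold fuzzy_meet, fuzzy_comp in Hfz.
    assert (Ha1 : chi Rr a = 1).
    { unfold chi; destruct excluded_middle_informative as [_|Hn]; [lra|exfalso; apply Hn; left; apply Hrefl]. }
    assert (Ha2 : chi Ll a = 1).
    { unfold chi; destruct excluded_middle_informative as [_|Hn]; [lra|exfalso; apply Hn; left; apply Hrefl]. }
    rewrite Ha1, Ha2, Rmin_left in Hfz by lra.
    assert (Hex : exists y z (g : G), le a (op y g z) /\ Ll y /\ Rr z).
    { apply Classical_Prop.NNPP. intro Hno.
      set (E := fun t => exists p, A_set op le a p /\ t = Rmin (chi Ll (fst p)) (chi Rr (snd p))).
      assert (U : is_ub_Rbar E (Finite 0)).
      { intros t [[y z] [[g Hg] ->]]. simpl in *.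
        unfold chi. destruct (excluded_middle_informative (Ll y)) as [Hy|Hy];
        destruct (excluded_middle_informative (Rr z)) as [Hz|Hz].
        - exfalso; apply Hno; exists y, z, g; auto.
        - unfold Rmin; destruct Rle_dec; lra.
        - unfold Rmin; destruct Rle_dec; lra.
        - unfold Rmin; destruct Rle_dec; lra. }
      destruct (Lub_Rbar_correct E) as [Hub Hlub].
      fold E in Hfz.
      destruct (Lub_Rbar E) as [l| |] eqn:Hl.
      + specialize (Hlub _ U). simpl in Hlub. lra.
      + lra.
      + lra. }
    destruct Hex as [y [z [g [Ha [Hy Hz]]]]].
    destruct Hy as [Hy|[m [g' Hy]]]; destruct Hz as [Hz|[n [g'' Hz]]].
    +
      assert (H1 : le a (op a g a)) by (eapply Htrans; [exact Ha| apply Hm2; auto]).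
      exists a, a, g, g, g.
      apply Htrans with (op (op a g a) g a).
      * eapply Htrans; [exact H1|]. apply Hmono; exact H1.
      * eapply Htrans; [apply (Hmono a (op a g a) (op a g a) g H1)|].
        rewrite !Hassoc. apply Hrefl.
    + assert (H1 : le a (op a g (op a g'' n))) by (eapply Htrans; [exact Ha| apply Hm2; auto]).
      exists a, (op n g'' n), g, g, g''.
      eapply Htrans; [exact H1|].
      eapply Htrans; [apply Hm2; [apply Hrefl| apply (proj1 (Hmono _ _ _ g'' H1))]|].
      rewrite !Hassoc. apply Hrefl.
    + assert (H1 : le a (op (op m g' a) g a)) by (eapply Htrans; [exact Ha| apply Hm2; auto]).
      exists (op m g' m), a, g', g, g.
      eapply Htrans; [exact H1|].
      eapply Htrans; [apply Hm2; [apply Hm2; [apply Hrefl|exact H1]| apply Hrefl]|].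
      rewrite !Hassoc. apply Hrefl.
    + assert (H1 : le a (op (op m g' a) g (op a g'' n))) by (eapply Htrans; [exact Ha| apply Hm2; auto]).
      exists m, n, g', g, g''.
      eapply Htrans; [exact H1|]. rewrite !Hassoc. apply Hrefl.
Qed.
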